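(* Let $n,m\in\mathbb{N}$, $f:\mathbb{F}_2^n\to\mathbb{F}_2$, $S\subseteq\mathbb{F}_2^n$, and let $g:\mathbb{F}_2^n\to\mathbb{F}_2$ be the indicator of $S$ ($g(\mathbf{x})=1$ iff $\mathbf{x}\in S$). Then, when the two-query algorithm $A^{(m)2,3}_n(g,f,f)$ is executed, the probability that the driving qubit is measured as $\ket{1}$ equals $p:=2^{-n}\sum_{\mathbf{x}\in S}|\mathcal{H}^{(m)}_f(\mathbf{x})|^2$.
   Context: $\zeta_m=e^{2\pi i/m}$; $wt$ is Hamming weight; $\mathbf{x}\cdot\mathbf{y}=\bigoplus_i x_iy_i$. The $m$-Hadamard transform is $\mathcal{H}^{(m)}_f(\boldsymbol{\omega})=2^{-n/2}\sum_{\mathbf{x}}(-1)^{f(\mathbf{x})\oplus\mathbf{x}\cdot\boldsymbol{\omega}}\zeta_m^{wt(\mathbf{x})}$. Quantum gates: $\mathrm{H}$ is the Hadamard gate; $\Omega_m=\frac{1}{\sqrt2}\begin{pmatrix}1&\zeta_m\\1&-\zeta_m\end{pmatrix}$; $\mathrm{S}_m=\mathrm{diag}(1,\zeta_m)$; for a Boolean function $f$, $U_f$ denotes the phase oracle $\ket{\mathbf{x}}\mapsto(-1)^{f(\mathbf{x})}\ket{\mathbf{x}}$ on $n$ qubits (realized via an ancilla in state $\ket{-}$). Algorithm $A^{(m)2,3}_n(f_1,f_2,f_3)$: start with a driving qubit in $\ket{+}$ and an $n$-qubit register in $\ket{0^n}$; apply $\mathrm{H}^{\otimes n}$ to the register;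 then, controlled on the driving qubit being $\ket{0}$, apply to the register in order $U_{f_2}$, $\Omega_m^{\otimes n}$, $U_{f_1}$, $\mathrm{H}^{\otimes n}$; controlled on the driving qubit being $\ket{1}$, apply in order $\mathrm{S}_m^{\otimes n}$, $U_{f_3}$; finally apply $\mathrm{H}$ to the driving qubit and measure it in the computational basis. *)

(* Defs.v *)
From HB Require Import structures.
From mathcomp Require Import all_boot all_order all_algebra.
From mathcomp Require Import complex.
From mathcomp Require Import reals trigo.
Set Implicit Arguments. Unset Strict Implicit. Unset Printing Implicit Defensive.
Import Order.TTheory GRing.Theory Num.Theory.
Local Open Scope ring_scope.
Local Open Scope complex_scope.

Definition bits (n : nat) := {ffun 'I_n -> bool}.

Section Q.
Variable R : realType.
Local Notation C := R[i].

(* zeta_m = e^{2 pi i / m} (for m = 0 the mathcomp convention 1/0 = 0 gives 1) *)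
Definition zeta (m : nat) : C := (cos (2 * pi / m%:R)) +i* (sin (2 * pi / m%:R)).

Definition sqrt2 : C := (Num.sqrt (2 : R))%:C.

Definition sgnb (b : bool) : C := if b then -1 else 1.

Definition wt n (x : bits n) : nat := \sum_(i < n) (x i : nat).
Definition dotb n (x y : bits n) : bool := \big[addb/false]_(i < n) (x i && y i).

Definition mHadamard n (m : nat) (f : bits n -> bool) (w : bits n) : C :=
  sqrt2 ^- n * \sum_(x : bits n) sgnb (f x (+) dotb x w) * zeta m ^+ wt x.

(* single-qubit gates as 2x2 matrices G row col (false = |0>, true = |1>) *)
Definition gH (r c : bool) : C := sgnb (r && c) / sqrt2.
Definition gOmega (m : nat) (r c : bool) : C :=
  (if c then zeta m else 1) * sgnb (r && c) / sqrt2.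
Definition gS (m : nat) (r c : bool) : C :=
  if r == c then (if c then zeta m else 1) else 0.

Definition regstate n := bits n -> C.
Definition tensorn n (G : bool -> bool -> C) (psi : regstate n) : regstate n :=
  fun y => \sum_(x : bits n) (\prod_(i < n) G (y i) (x i)) * psi x.
Definition Uf n (f : bits n -> bool) (psi : regstate n) : regstate n :=
  fun x => sgnb (f x) * psi x.
Definition ket0n n : regstate n := fun x => if x == [ffun => false] then 1 else 0.

(* Algorithm A^{(m)2,3}_n(f1,f2,f3): joint state indexed by (driving bit, register) *)
Definition alg_final_state n (m : nat) (f1 f2 f3 : bits n -> bool) : bool -> regstate n :=
  let psi0 := tensorn gH (@ket0n n) in
  let branch0 := tensorn gH (Uf f1 (tensorn (gOmega m) (Uf f2 psi0))) in
  let branch1 := Uf f3 (tensorn (gS m) psi0) in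
  (* state after the controlled operations: (|0> (x) branch0 + |1> (x) branch1)/sqrt2 *)
  let st := fun (c : bool) (y : bits n) => (if c then branch1 y else branch0 y) / sqrt2 in
  fun d y => \sum_(c : bool) gH d c * st c y.

Definition alg_prob n (m : nat) (f1 f2 f3 : bits n -> bool) (b : bool) : C :=
  \sum_(y : bits n) `|alg_final_state m f1 f2 f3 b y| ^+ 2.

End Q.

(* Main.v *)
Require Import Defs.
From HB Require Import structures.
From mathcomp Require Import all_boot all_order all_algebra.
From mathcomp Require Import complex.
From mathcomp Require Import reals trigo.
From mathcomp Require Import ring.
Set Implicit Arguments. Unset Strict Implicit. Unset Printing Implicit Defensive.
Import Order.TTheory GRing.Theory Num.Theory.
Local Open Scope ring_scope.
Local Open Scope complex_scope.

Section Aux.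
Variable R : realType.
Local Notation C := R[i].
Local Notation s := (sqrt2 R).

Lemma s2 : s * s = 2.
Proof.
rewrite /sqrt2 -rmorphM /= -expr2 sqr_sqrtr ?ler0n // ; apply/eqP; by rewrite eq_complex /= addr0 !eqxx.
Qed.

Lemma s_neq0 : s != 0.
Proof. apply/negP => /eqP h; have := s2; rewrite h mul0r => /eqP; by rewrite eq_sym pnatr_eq0. Qed.

Lemma conjcM (x y : C) : conjc (x * y) = conjc x * conjc y.
Proof. exact: rmorphM. Qed.
Lemma conjcX (x : C) k : conjc (x ^+ k) = conjc x ^+ k.
Proof. exact: rmorphXn. Qed.
Lemma conjc_sum (I : finType) (F : I -> C) : conjc (\sum_(i : I) F i) = \sum_(i : I) conjc (F i).
Proof. exact: rmorph_sum. Qed.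

Lemma conj_s : conjc s = s.
Proof. by rewrite /sqrt2 conjc_real. Qed.

Lemma conj_sinv : conjc (s^-1) = s^-1.
Proof. by rewrite conjc_inv conj_s. Qed.

Lemma conj_sgn b : conjc (sgnb R b) = sgnb R b.
Proof. by case: b; rewrite /sgnb ?rmorphN1 ?rmorph1. Qed.

Lemma sgnbD a b : sgnb R (a (+) b) = sgnb R a * sgnb R b.
Proof. by case: a; case: b; rewrite /sgnb /= ?mulN1r ?opprK ?mul1r ?mulr1. Qed.

Lemma sgnb_dot n (x y : bits n) : sgnb R (dotb x y) = \prod_(i < n) sgnb R (x i && y i).
Proof. rewrite /dotb; apply: (big_morph (sgnb R)) => //; exact: sgnbD. Qed.

Lemma dotbC n (x y : bits n) : dotb x y = dotb y x.
Proof. by rewrite /dotb; apply: eq_bigr => i _; rewrite andbC. Qed.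

Lemma zeta_wt m n (x : bits n) :
  zeta R m ^+ wt x = \prod_(i < n) (if x i then zeta R m else 1).
Proof.
rewrite /wt; rewrite (big_morph (fun k : nat => zeta R m ^+ k) (id1 := 1) (op1 := *%R)).
- by apply: eq_bigr => i _; case: (x i).
- by move=> a b; rewrite exprD.
- by [].
Qed.

Lemma sum_prod n (F : 'I_n -> bool -> C) :
  \sum_(z : bits n) \prod_(i < n) F i (z i) = \prod_(i < n) (F i true + F i false).
Proof.
have -> : \prod_(i < n) (F i true + F i false) = \prod_(i < n) \sum_(j : bool) F i j.
  by apply: eq_bigr => i _; rewrite big_bool.
by rewrite bigA_distr_bigA.
Qed.

Lemma char_orth n (a b : bits n) :
  \sum_(z : bits n) sgnb R (dotb a z) * sgnb R (dotb b z) = if a == b then 2 ^+ n else 0.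
Proof.
under eq_bigr => z _ do rewrite !sgnb_dot -big_split /=.
rewrite (sum_prod (fun i zz => sgnb R (a i && zz) * sgnb R (b i && zz))).
case: eqP => [->|/eqP neq].
  rewrite -[in RHS](card_ord n) -prodr_const; apply: eq_bigr => i _.
  by case: (b i); rewrite /sgnb /= ?mulN1r ?opprK ?mulr1.
have [i hi] : exists i, a i != b i.
  apply/existsP; apply: contraR neq => /existsPn h; apply/eqP/ffunP => i.
  by have := h i; rewrite negbK => /eqP.
rewrite (bigD1 i) //=; move: hi; case: (a i); case: (b i) => //= _;
  by rewrite /sgnb ?mulN1r ?mulr1 ?mul1r addNr ?addrN mul0r.
Qed.

Local Notation c := (s^-1).

Lemma prod_gH n (y x : bits n) :
  \prod_(i < n) gH R (y i) (x i) = c ^+ n * sgnb R (dotb y x).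
Proof.
by rewrite sgnb_dot /gH big_split /= prodr_const card_ord mulrC.
Qed.

Lemma tensor_gH n (psi : regstate R n) y :
  tensorn (gH R) psi y = c ^+ n * \sum_(x : bits n) sgnb R (dotb y x) * psi x.
Proof.
rewrite /tensorn mulr_sumr; apply: eq_bigr => x _.
by rewrite prod_gH mulrA.
Qed.

Lemma tensor_gOmega m n (psi : regstate R n) y :
  tensorn (gOmega R m) psi y =
  c ^+ n * \sum_(x : bits n) sgnb R (dotb y x) * zeta R m ^+ wt x * psi x.
Proof.
rewrite /tensorn mulr_sumr; apply: eq_bigr => x _.
rewrite zeta_wt sgnb_dot /gOmega !big_split /= prodr_const card_ord.
by ring.
Qed.

Lemma tensor_gS m n (psi : regstate R n) y :
  tensorn (gS R m) psi y = zeta R m ^+ wt y * psi y.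
Proof.
rewrite /tensorn (bigD1 y) //= [X in _ + X]big1 ?addr0.
  by rewrite zeta_wt; congr (_ * _); apply: eq_bigr => i _; rewrite /gS eqxx.
move=> x hx.
have [i hi] : exists i, y i != x i.
  apply/existsP; apply: contraR hx => /existsPn h; apply/eqP/ffunP => i.
  by have := h i; rewrite negbK => /eqP.
by rewrite (bigD1 i) //= /gS (negbTE hi) mul0r mul0r.
Qed.

Lemma psi0E n y : tensorn (gH R) (@ket0n R n) y = c ^+ n.
Proof.
rewrite tensor_gH (bigD1 [ffun => false]) //= big1 ?addr0.
  rewrite /ket0n eqxx mulr1.
  have -> : dotb y [ffun => false] = false.
    by rewrite /dotb big1 // => i _; rewrite ffunE andbF.
  by rewrite mulr1.
by move=> x hx; rewrite /ket0n (negbTE hx) mulr0.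
Qed.

Lemma cc2 : c * c * 2 = 1.
Proof. by rewrite -invfM s2 mulVf // pnatr_eq0. Qed.

Definition inner n (psi phi : regstate R n) := \sum_(y : bits n) psi y * conjc (phi y).

Lemma unitary n (psi phi : regstate R n) :
  inner (tensorn (gH R) psi) (tensorn (gH R) phi) = inner psi phi.
Proof.
rewrite /inner.
have E : forall y : bits n, tensorn (gH R) psi y * conjc (tensorn (gH R) phi y) =
   \sum_(x : bits n) \sum_(x' : bits n) (c ^+ n * c ^+ n * (psi x * conjc (phi x'))) *
      (sgnb R (dotb x y) * sgnb R (dotb x' y)).
  move=> y; rewrite !tensor_gH conjcM conjcX conj_sinv conjc_sum.
  rewrite mulrACA mulr_suml mulr_sumr; apply: eq_bigr => x _.
  rewrite mulr_sumr mulr_sumr; apply: eq_bigr => x' _.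
  rewrite conjcM conj_sgn ![dotb y _]dotbC. ring.
rewrite (eq_bigr _ (fun y _ => E y)) exchange_big /=.
apply: eq_bigr => x _; rewrite exchange_big /=.
under eq_bigr => x' _ do rewrite -mulr_sumr char_orth.
rewrite (bigD1 x) //= eqxx big1 ?addr0; last by move=> x0 hx0; rewrite eq_sym (negbTE hx0) mulr0.
by rewrite mulrAC -!exprMn cc2 expr1n mul1r.
Qed.

Lemma tensor_lin n (G : bool -> bool -> C) (psi phi : regstate R n) y :
  tensorn G psi y - tensorn G phi y = tensorn G (fun x => psi x - phi x) y.
Proof. by rewrite /tensorn -sumrB; apply: eq_bigr => x _; rewrite mulrBr. Qed.

Lemma tE m n (f : bits n -> bool) y :
  tensorn (gOmega R m) (Uf f (tensorn (gH R) (@ket0n R n))) y = c ^+ n * mHadamard R m f y.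
Proof.
rewrite tensor_gOmega /mHadamard -exprVn mulrA !mulr_sumr; apply: eq_bigr => x _.
by rewrite /Uf psi0E sgnbD dotbC; ring.
Qed.

Lemma b1E m n (f : bits n -> bool) y :
  Uf f (tensorn (gS R m) (tensorn (gH R) (@ket0n R n))) y =
  tensorn (gH R) (tensorn (gOmega R m) (Uf f (tensorn (gH R) (@ket0n R n)))) y.
Proof.
rewrite tensor_gH.
under eq_bigr => x _ do rewrite tensor_gOmega.
have -> : \sum_(x : bits n) sgnb R (dotb y x) *
   (c ^+ n * \sum_(z : bits n) sgnb R (dotb x z) * zeta R m ^+ wt z *
      Uf f (tensorn (gH R) (@ket0n R n)) z) =
  \sum_(z : bits n) (c ^+ n * c ^+ n * zeta R m ^+ wt z * sgnb R (f z)) *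
     \sum_(x : bits n) sgnb R (dotb y x) * sgnb R (dotb z x).
  under eq_bigr => x _ do rewrite mulr_sumr mulr_sumr.
  rewrite exchange_big /=; apply: eq_bigr => z _; rewrite mulr_sumr; apply: eq_bigr => x _.
  by rewrite /Uf psi0E [dotb x z]dotbC; ring.
rewrite (bigD1 y) //= char_orth eqxx big1 ?addr0; last first.
  by move=> z hz; rewrite char_orth eq_sym (negbTE hz) mulr0.
rewrite /Uf tensor_gS psi0E.
have h : c ^+ n * 2 ^+ n * c ^+ n = 1 by rewrite mulrAC -!exprMn cc2 expr1n.
transitivity (sgnb R (f y) * (zeta R m ^+ wt y * c ^+ n) * (c ^+ n * 2 ^+ n * c ^+ n)); first by rewrite h mulr1.
ring.
Qed.
End Aux.

Local Close Scope complex_scope.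
Unset Implicit Arguments. Set Strict Implicit.

Theorem proposition1 (R : realType) (n m : nat) (f : bits n -> bool) (S : {set bits n}) :
  let g := fun x : bits n => x \in S in
  alg_prob R m g f f true =
    (2%:R ^- n) * \sum_(x in S) `|mHadamard R m f x| ^+ 2.
Proof.
move=> g.
set t := tensorn (gOmega R m) (Uf f (tensorn (gH R) (@ket0n R n))).
set D := tensorn (gH R) (fun x => Uf g t x - t x).
have F : forall y, alg_final_state R m g f f true y = D y / 2.
  move=> y; rewrite /alg_final_state big_bool /= b1E -/t /D -tensor_lin.
  set X := tensorn (gH R) (Uf g t) y; set Y := tensorn (gH R) t y.
  rewrite /gH /sgnb /= -(s2 R).
  have := s_neq0 R; move=> hs. by field.
rewrite /alg_prob.
under eq_bigr => y _ do rewrite F.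
have hs := s_neq0 R.
have h2 : (2 : R[i]) != 0 by rewrite pnatr_eq0.
transitivity (inner D D / 4).
  rewrite /inner mulr_suml; apply: eq_bigr => y _.
  rewrite sqr_normc conjcM conjc_inv conjc_nat; by field.
rewrite /D unitary /inner mulr_suml mulr_sumr [RHS]big_mkcond /=; apply: eq_bigr => y _.
rewrite /Uf /g /t tE.
have hcc : (sqrt2 R)^-1 ^+ n * (sqrt2 R)^-1 ^+ n = 2 ^- n.
  by rewrite -exprMn -invfM (s2 R) exprVn.
case: (y \in S); rewrite /sgnb; last by rewrite mul1r subrr !mul0r.
set H := mHadamard R m f y; clearbody H.
have -> : -1 * ((sqrt2 R)^-1 ^+ n * H) - (sqrt2 R)^-1 ^+ n * H =
          (- 2) * ((sqrt2 R)^-1 ^+ n * H) by ring.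
rewrite sqr_normc !conjcM conjcX conj_sinv -hcc.
have -> : conjc (-2 : R[i]) = -2.
  by apply/eqP; rewrite eq_complex /= !addr0 !oppr0 !eqxx.
by field.
Qed.
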